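(* Let $K_5$ be the complete graph on vertex set $[5]$. Then the abelian group $H_1(K_5;\mathbb Z)$ contains an element of order $2$ (i.e. it has $\mathbb Z_2$-torsion).
   Context: Let $G$ be a simple graph with vertex set $[n]$; an edge $\{i,j\}$ with $i<j$ is written $(i,j)$, and $E(G)$ is totally ordered lexicographically. For $F\subseteq E(G)$ let $\beta(F)$ be the partition of $[n]$ into the vertex sets of the connected components of $([n],F)$, and $\mathfrak S_{\beta(F)}\subseteq\mathfrak S_n$ the subgroup of permutations mapping each block to itself. For a commutative ring $R$ let $a_F=\sum_{\sigma\in\mathfrak S_{\beta(F)}}\sigma\in R[\mathfrak S_n]$ and $\mathcal M_F=R[\mathfrak S_n]a_F$; for $e\in F$, $\mathcal M_F\subseteq\mathcal M_{F\setminus e}$. The chain complex is $C_i(G;R)=\bigoplus_{|F|=i}\mathcal M_F$ with $d_i(x)=\sum_{e\in F}(-1)^{|\{f\in F: f<e\}|}\iota_{F,F\setminus e}(x)$ for $x\in\mathcal M_F$, $\iota$ the inclusion into the summand $\mathcal M_{F\setminus e}$; $H_i(G;R)=\ker d_i/\operatorname{im}d_{i+1}$ (the $q$-degree zero chromatic symmetric homology). *)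

(* Defs.v *)
From HB Require Import structures.
From mathcomp Require Import all_boot all_order all_algebra all_fingroup.
Set Implicit Arguments. Unset Strict Implicit. Unset Printing Implicit Defensive.
Import GRing.Theory.
Local Open Scope ring_scope.

(* Vertices are 'I_n; an edge {i,j}, i<j, is the pair (i,j). *)
Definition edge (n : nat) := ('I_n * 'I_n)%type.

Definition edge_lt n (p q : edge n) : bool :=
  (p.1 < q.1)%N || ((p.1 == q.1) && (p.2 < q.2)%N).

Definition adjF n (F : {set edge n}) : rel 'I_n :=
  fun x y => ((x, y) \in F) || ((y, x) \in F).

(* sigma lies in S_{beta(F)}: it maps each connected component of ([n],F) to itself *)
Definition in_Sbeta n (F : {set edge n}) (s : {perm 'I_n}) : bool :=
  [forall x : 'I_n, connect (adjF F) x (s x)].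

(* the group ring Z[S_n], elements as finitely supported Z-valued functions *)
Definition galg (n : nat) := {ffun {perm 'I_n} -> int}.

Definition gmul n (x y : galg n) : galg n :=
  [ffun g => \sum_(h : {perm 'I_n}) x h * y (h^-1 * g)%g].

Definition aF n (F : {set edge n}) : galg n :=
  [ffun s => if in_Sbeta F s then 1 else 0].

Definition inM n (F : {set edge n}) (x : galg n) : Prop :=
  exists y : galg n, x = gmul y (aF F).

Definition chain (n : nat) := {ffun {set edge n} -> galg n}.

Definition is_chain n (E : {set edge n}) (i : nat) (c : chain n) : Prop :=
  forall F : {set edge n},
    inM F (c F) /\ (~~ (F \subset E) || (#|F| != i)%N -> c F = 0).

Definition bd n (E : {set edge n}) (c : chain n) : chain n :=
  [ffun F' => \sum_(e in E :\: F')
       (if odd #|[set f in F' | edge_lt f e]| then - c (e |: F') else c (e |: F'))].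

Definition Kn (n : nat) : {set edge n} := [set p : edge n | (p.1 < p.2)%N].

(* Main.v *)
Require Import Defs.
From HB Require Import structures.
From mathcomp Require Import all_boot all_order all_algebra all_fingroup.
Local Open Scope ring_scope.
Set Implicit Arguments. Unset Strict Implicit. Unset Printing Implicit Defensive.
Import GRing.Theory.

Definition table := seq (seq nat * int).
Definition slots := seq (seq nat * table).

Section Comp.
Local Open Scope nat_scope.
Definition ea (i : nat) : nat := nth 0 [:: 0;0;0;0;1;1;1;2;2;3] i.
Definition eb (i : nat) : nat := nth 0 [:: 1;2;3;4;2;3;4;3;4;4] i.
Definition adjE (i x y : nat) : bool := ((x == ea i) && (y == eb i)) || ((x == eb i) && (y == ea i)).
Definition adjN (s : seq nat) (x y : nat) : bool := has (fun i => adjE i x y) s.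
Definition RN (s : seq nat) (x y : nat) : bool :=
  [|| x == y, adjN s x y | has (fun z => adjN s x z && adjN s z y) (iota 0 5)].
Definition inSN (s : seq nat) (t : seq nat) : bool := all (fun i => RN s i (nth 0 t i)) (iota 0 5).
Definition comp_inv (tg th : seq nat) : seq nat := [seq nth 0 tg (index i th) | i <- iota 0 5].
Definition sameN (s s2 : seq nat) : bool := all (fun x => x \in s2) s && all (fun x => x \in s) s2.
Definition eltN (m k : nat) : bool := (ea m < ea k) || ((ea m == ea k) && (eb m < eb k)).
End Comp.

Definition isum (T : Type) (f : T -> int) (r : seq T) : int := foldr (fun x acc => f x + acc) 0 r.
Definition b2i (b : bool) : int := if b then 1 else 0.
Definition valN (sl : slots) (s : seq nat) (tg : seq nat) : int :=
  isum (fun j => if sameN s j.1 then isum (fun i => i.2 * b2i (inSN s (comp_inv tg i.1))) j.2 else 0) sl.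
Definition sgnN {V : zmodType} (b : bool) (x : V) : V := if b then - x else x.
Definition bdN (sl : slots) (s0 : seq nat) (tg : seq nat) : int :=
  isum (fun k => if k \in s0 then 0 else sgnN (odd (count (fun m => eltN m k) s0)) (valN sl (k :: s0) tg)) (iota 0 10).
Definition L120 : seq (seq nat) := permutations (iota 0 5).

Lemma isumE (T : Type) (f : T -> int) r : isum f r = \sum_(x <- r) f x.
Proof. by elim: r => [|x r IH]; rewrite ?big_nil ?big_cons //= IH. Qed.

Definition code (g : {perm 'I_5}) : seq nat := [seq nat_of_ord (g (inord i)) | i <- iota 0 5].

Lemma size_code g : size (code g) = 5%N.
Proof. by rewrite size_map size_iota. Qed.

Lemma nth_code g i : (i < 5)%N -> nth 0%N (code g) i = nat_of_ord (g (inord i)).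
Proof. by move=> Hi; rewrite (nth_map 0%N) ?size_iota // nth_iota. Qed.

Lemma mem_code g t : (t \in code g) = (t < 5)%N.
Proof.
apply/mapP/idP => [[i _ ->]|Ht]; first exact: ltn_ord.
exists (nat_of_ord ((g^-1)%g (inord t))); first by rewrite mem_iota /= ltn_ord.
by rewrite inord_val permKV inordK.
Qed.

Lemma uniq_code g : uniq (code g).
Proof.
rewrite map_inj_in_uniq ?iota_uniq // => i j; rewrite !mem_iota /= => Hi Hj.
by move=> /ord_inj /perm_inj /(congr1 (@nat_of_ord _)); rewrite !inordK.
Qed.

Lemma code_L120 g : code g \in L120.
Proof.
rewrite /L120 mem_permutations; apply: uniq_perm; rewrite ?uniq_code ?iota_uniq //.
by move=> t; rewrite mem_code mem_iota.
Qed.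

Lemma code_inj : injective code.
Proof.
move=> g h E; apply/permP => x.
have Hx := ltn_ord x.
have Ex : inord (nat_of_ord x) = x := inord_val x.
have Eg := nth_code g Hx; have Eh := nth_code h Hx.
rewrite E Ex in Eg; rewrite Eg Ex in Eh; exact: ord_inj.
Qed.

Lemma sum_perm (f : seq nat -> int) :
  \sum_(h : {perm 'I_5}) f (code h) = \sum_(t <- L120) f t.
Proof.
rewrite -(big_map code predT f).
apply: perm_big.
have U : uniq (map code (index_enum {perm 'I_5})).
  by rewrite map_inj_uniq ?index_enum_uniq //; exact: code_inj.
have S : {subset map code (index_enum {perm 'I_5}) <= L120}.
  by move=> t /mapP [h _ ->]; exact: code_L120.
have Z : (size L120 <= size (map code (index_enum {perm 'I_5})))%N.
  by rewrite size_map [index_enum _]unlock -enumT -cardT card_Sn /L120 size_permutations ?iota_uniq.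
have [_ Eq] := uniq_min_size U S Z.
apply: uniq_perm => //.
Qed.

Lemma code_mulV h g : code (h^-1 * g)%g = comp_inv (code g) (code h).
Proof.
apply: (@eq_from_nth _ 0%N); first by rewrite size_code size_map size_iota.
rewrite size_code => i Hi.
rewrite nth_code // permM (nth_map 0%N) ?size_iota // nth_iota // add0n.

set j := nat_of_ord ((h^-1)%g (inord i)).
have Ej : inord j = (h^-1)%g (inord i) := inord_val _.
have Hj : (j < 5)%N := ltn_ord _.
have -> : index i (code h) = j.
  have <- : nth 0%N (code h) j = i by rewrite nth_code // Ej permKV inordK.
  by rewrite index_uniq ?size_code ?uniq_code.
by rewrite nth_code // Ej.
Qed.

Lemma from_iota (P : pred nat) n : all P (iota 0 n) -> forall i, (i < n)%N -> P i.
Proof. by move=> /allP H i Hi; apply: H; rewrite mem_iota. Qed.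

Lemma all2I (P : nat -> nat -> bool) m n :
  all (fun x => all (fun y => P x y) (iota 0 n)) (iota 0 m) ->
  forall x y, (x < m)%N -> (y < n)%N -> P x y.
Proof. by move=> H x y Hx Hy; apply: (from_iota (from_iota H Hx)). Qed.

Lemma all3I (P : nat -> nat -> nat -> bool) m n o :
  all (fun x => all (fun y => all (fun z => P x y z) (iota 0 o)) (iota 0 n)) (iota 0 m) ->
  forall x y z, (x < m)%N -> (y < n)%N -> (z < o)%N -> P x y z.
Proof. by move=> H x y z Hx Hy Hz; apply: (from_iota (all2I H Hx Hy)). Qed.

Definition E (i : nat) : edge 5 := (inord (ea i), inord (eb i)).
Definition setOf (s : seq nat) : {set edge 5} := [set x in map E s].
Definition lt10 (s : seq nat) : bool := all (fun i => i < 10)%N s.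

Lemma ea_lt i : (i < 10)%N -> (ea i < 5)%N.
Proof. by apply: (@from_iota (fun i => ea i < 5)%N 10); vm_compute. Qed.
Lemma eb_lt i : (i < 10)%N -> (eb i < 5)%N.
Proof. by apply: (@from_iota (fun i => eb i < 5)%N 10); vm_compute. Qed.
Lemma eab_lt i : (i < 10)%N -> (ea i < eb i)%N.
Proof. by apply: (@from_iota (fun i => ea i < eb i)%N 10); vm_compute. Qed.

Lemma eq_inord (x : 'I_5) a : (a < 5)%N -> (x == inord a) = (nat_of_ord x == a).
Proof.
move=> Ha; apply/eqP/eqP => [->|<-]; first by rewrite inordK.
exact: (esym (inord_val x)).
Qed.

Lemma eqEdge (p : edge 5) i : (i < 10)%N ->
  (p == E i) = (nat_of_ord p.1 == ea i) && (nat_of_ord p.2 == eb i).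
Proof. by move=> Hi; case: p => x y; rewrite /E xpair_eqE !eq_inord ?ea_lt ?eb_lt. Qed.

Lemma hasI (P : pred nat) n i : (i < n)%N -> P i -> has P (iota 0 n).
Proof. by move=> Hi Pi; apply/hasP; exists i => //; rewrite mem_iota. Qed.

Lemma hasIP (P : pred nat) n : has P (iota 0 n) -> exists2 i, (i < n)%N & P i.
Proof. by move=> /hasP [i]; rewrite mem_iota => /andP [_ Hi] Pi; exists i. Qed.

Lemma E_inj_aux : all (fun i => all (fun j => ((ea i == ea j) && (eb i == eb j)) ==> (i == j)) (iota 0 10)) (iota 0 10).
Proof. by vm_compute. Qed.

Lemma E_eq i j : (i < 10)%N -> (j < 10)%N -> (E i == E j) = (i == j).
Proof.
move=> Hi Hj; apply/idP/eqP => [|->//]; rewrite eqEdge //=.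
rewrite !inordK ?ea_lt ?eb_lt // => H.
have := all2I E_inj_aux Hi Hj.
by rewrite H => /eqP.
Qed.

Lemma mem_mapE (p : edge 5) s : (p \in map E s) = has (fun i => p == E i) s.
Proof. by elim: s => //= i s IH; rewrite in_cons IH. Qed.

Lemma E_in i s : (i < 10)%N -> lt10 s -> (E i \in map E s) = (i \in s).
Proof.
move=> Hi; elim: s => //= j s IH /andP [Hj Hs].
by rewrite !in_cons IH // E_eq.
Qed.

Definition kOf (x y : nat) : nat := find (fun i => (ea i == x) && (eb i == y)) (iota 0 10).

Lemma kOf_aux : all (fun x => all (fun y => (x < y)%N ==>
   [&& kOf x y < 10, ea (kOf x y) == x & eb (kOf x y) == y]%N) (iota 0 5)) (iota 0 5).
Proof. by vm_compute. Qed.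

Lemma Kn_setOf : Kn 5 = setOf (iota 0 10).
Proof.
apply/setP => [[x y]]; rewrite /Kn /setOf !in_set mem_mapE.
apply/idP/idP => [Hxy|/hasIP [i Hi]].
  have := all2I kOf_aux (ltn_ord x) (ltn_ord y).
  rewrite Hxy => /and3P [Hk /eqP Ha /eqP Hb].
  by apply: (hasI Hk); rewrite eqEdge // Ha Hb !eqxx.
rewrite eqEdge // => /andP [/eqP Hx /eqP Hy].
by rewrite Hx Hy eab_lt.
Qed.

Lemma in_setOf p s : (p \in setOf s) = (p \in map E s).
Proof. by rewrite inE. Qed.

Lemma adjF_setOf s (x y : 'I_5) : lt10 s -> adjF (setOf s) x y = adjN s x y.
Proof.
rewrite /adjF !in_setOf !mem_mapE /adjN -has_predU => Hs.
apply: eq_in_has => i Hi /=.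
have Hi10 : (i < 10)%N := (allP Hs) i Hi.
rewrite !eqEdge //= /adjE.
by case: (nat_of_ord x == ea i); case: (nat_of_ord y == eb i); case: (nat_of_ord y == ea i); case: (nat_of_ord x == eb i).
Qed.

Lemma conn_char (T : finType) (r R : rel T) : (forall x, R x x) ->
  (forall x y z, R x y -> r y z -> R x z) -> (forall x y, R x y -> connect r x y) ->
  forall x y, connect r x y = R x y.
Proof.
move=> Rr Rc Rcon x y; apply/idP/idP => [/connectP [p Hp ->]|]; last exact: Rcon.
suff : forall z, path r z p -> R x z -> R x (last z p) by apply.
elim: p {Hp} => //= w p IH z /andP [Hzw Hp] Rxz.
exact: (IH _ Hp (Rc _ _ _ Rxz Hzw)).
Qed.

Definition closedN (s : seq nat) : bool :=
  all (fun x => all (fun y => all (fun z => (RN s x y && adjN s y z) ==> RN s x z) (iota 0 5)) (iota 0 5)) (iota 0 5).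

Lemma connect_setOf s (x y : 'I_5) : lt10 s -> closedN s ->
  connect (adjF (setOf s)) x y = RN s x y.
Proof.
move=> Hs Hc.
apply: (@conn_char _ _ (fun x y : 'I_5 => RN s x y)) => [u|u v w|u v].
- by rewrite /RN eqxx.
- rewrite adjF_setOf // => H1 H2.
  have := all3I Hc (ltn_ord u) (ltn_ord v) (ltn_ord w).
  by rewrite H1 H2.
- rewrite /RN => /or3P [/eqP /ord_inj ->|H|/hasIP [z Hz /andP [H1 H2]]]; first exact: connect0.
    by apply: connect1; rewrite adjF_setOf.
  apply: (@connect_trans _ _ (inord z)); apply: connect1; rewrite adjF_setOf // inordK //.
Qed.

Lemma in_Sbeta_setOf s g : lt10 s -> closedN s -> in_Sbeta (setOf s) g = inSN s (code g).
Proof.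
move=> Hs Hc; rewrite /in_Sbeta /inSN.
apply/forallP/allP => [H i|H x].
  rewrite mem_iota add0n => /andP [_ Hi]; have := H (inord i).
  by rewrite connect_setOf // nth_code // inordK.
rewrite connect_setOf //.
have := H (nat_of_ord x); rewrite mem_iota add0n ltn_ord => /(_ isT).
rewrite nth_code ?ltn_ord //.
by have -> : inord (nat_of_ord x) = x := inord_val x.
Qed.

Lemma aF_setOf s g : lt10 s -> closedN s -> aF (setOf s) g = b2i (inSN s (code g)).
Proof. by move=> Hs Hc; rewrite ffunE in_Sbeta_setOf. Qed.

Lemma gmul_setOf (Y : seq nat -> int) s g : lt10 s -> closedN s ->
  gmul [ffun h => Y (code h)] (aF (setOf s)) g =
  \sum_(t <- L120) Y t * b2i (inSN s (comp_inv (code g) t)).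
Proof.
move=> Hs Hc; rewrite /gmul ffunE.
under eq_bigr => h _ do rewrite ffunE aF_setOf // code_mulV.
exact: (sum_perm (fun t => Y t * b2i (inSN s (comp_inv (code g) t)))).
Qed.

Definition tabv (tb : table) (t : seq nat) : int := \sum_(j <- tb) (if t == j.1 then j.2 else 0).
Definition chainOf (sl : slots) : chain 5 :=
  [ffun F => gmul [ffun h => \sum_(j <- sl) if F == setOf j.1 then tabv j.2 (code h) else 0] (aF F)].

Lemma setOf_eq s s2 : lt10 s -> lt10 s2 -> (setOf s == setOf s2) = sameN s s2.
Proof.
move=> Hs Hs2; apply/eqP/idP => [H|/andP [/allP H1 /allP H2]].
  apply/andP; split; apply/allP => i Hi.
    have Hi10 : (i < 10)%N := allP Hs i Hi.
    by rewrite -(E_in Hi10 Hs2) -in_setOf -H in_setOf E_in.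
  have Hi10 : (i < 10)%N := allP Hs2 i Hi.
  by rewrite -(E_in Hi10 Hs) -in_setOf H in_setOf E_in.
apply/setP => p; rewrite !in_setOf; apply/mapP/mapP => [[i Hi ->]|[i Hi ->]].
  by exists i => //; apply: H1.
by exists i => //; apply: H2.
Qed.

Lemma sum_pick (r : seq (seq nat)) x (G : seq nat -> int) : uniq r -> x \in r ->
  \sum_(t <- r) (if t == x then G t else 0) = G x.
Proof.
move=> U Hx; rewrite (bigD1_seq x) //= eqxx big1 ?addr0 // => t /negbTE ->.
by [].
Qed.

Lemma tab_sum (tb : table) (G : seq nat -> int) : all (fun j => j.1 \in L120) tb ->
  \sum_(t <- L120) tabv tb t * G t = \sum_(j <- tb) j.2 * G j.1.
Proof.
move=> H; rewrite /tabv.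
under eq_bigr do rewrite big_distrl /=.
rewrite exchange_big /=; apply: eq_big_seq => j Hj.
have := sum_pick (fun t => j.2 * G t) (permutations_uniq (iota 0 5)) (allP H j Hj).
move=> <-; apply: eq_bigr => t _; by case: (t == j.1); rewrite ?mul0r.
Qed.

Definition slots_ok (sl : slots) : bool :=
  all (fun j => lt10 j.1 && all (fun i => i.1 \in L120) j.2) sl.

Lemma chain_val sl s g : lt10 s -> closedN s -> slots_ok sl ->
  chainOf sl (setOf s) g = valN sl s (code g).
Proof.
move=> Hs Hc Hsl; rewrite ffunE.
have -> : [ffun h => \sum_(j <- sl) if setOf s == setOf j.1 then tabv j.2 (code h) else 0]
   = [ffun h => (fun t => \sum_(j <- sl) if sameN s j.1 then tabv j.2 t else 0) (code h)].
  apply/ffunP => h; rewrite !ffunE; apply: eq_big_seq => j Hj.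
  by have /andP [Hj1 _] := allP Hsl j Hj; rewrite setOf_eq.
rewrite (gmul_setOf (fun t => \sum_(j <- sl) if sameN s j.1 then tabv j.2 t else 0)) // /valN isumE.
under eq_bigr do rewrite big_distrl /=.
rewrite exchange_big /=; apply: eq_big_seq => j Hj.
have /andP [_ Hj2] := allP Hsl j Hj.
case: (sameN s j.1).
  by rewrite tab_sum // isumE.
by rewrite big1 // => t _; rewrite mul0r.
Qed.

Lemma gmul0 (x : galg 5) : gmul 0 x = 0.
Proof. by apply/ffunP => g; rewrite !ffunE big1 // => h _; rewrite ffunE mul0r. Qed.

Lemma setOf_sub s : lt10 s -> setOf s \subset Kn 5.
Proof.
move=> Hs; rewrite Kn_setOf; apply/subsetP => p; rewrite !in_setOf => /mapP [i Hi ->].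
by apply: map_f; rewrite mem_iota add0n (allP Hs i Hi).
Qed.

Lemma card_setOf s : uniq s -> lt10 s -> #|setOf s| = size s.
Proof.
move=> U Hs; rewrite /setOf cardsE (card_uniqP _) ?size_map //.
rewrite map_inj_in_uniq // => i j Hi Hj /eqP.
by rewrite E_eq ?(allP Hs i Hi) ?(allP Hs j Hj) // => /eqP.
Qed.

Definition slots_sz (sl : slots) (i : nat) : bool :=
  all (fun j => [&& lt10 j.1, uniq j.1 & size j.1 == i]) sl.

Lemma chainOf_zero sl i (F : {set edge 5}) : slots_sz sl i -> ~~ (F \subset Kn 5) || (#|F| != i) -> chainOf sl F = 0.
Proof.
move=> Hsl HF; rewrite ffunE.
rewrite (_ : [ffun h => _] = 0) ?gmul0 //.
apply/ffunP => h; rewrite !ffunE; apply: big1_seq => j /andP [_ Hj].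
have /and3P [Hj1 Hj2 /eqP Hj3] := allP Hsl j Hj.
case: eqP => // EF; move: HF; rewrite EF setOf_sub // card_setOf // Hj3 eqxx.
by [].
Qed.

Lemma chainOf_is_chain sl i : slots_sz sl i -> is_chain (Kn 5) i (chainOf sl).
Proof.
move=> Hsl F; split; last exact: chainOf_zero.
by eexists; rewrite ffunE.
Qed.

Lemma edge_ltE m k : (m < 10)%N -> (k < 10)%N -> edge_lt (E m) (E k) = eltN m k.
Proof.
move=> Hm Hk; rewrite /edge_lt /eltN /E /= !inordK ?ea_lt ?eb_lt //.
by rewrite eq_inord ?ea_lt // inordK ?ea_lt.
Qed.

Lemma sum_setOf (H : edge 5 -> galg 5) r : uniq r -> lt10 r ->
  \sum_(e in setOf r) H e = \sum_(k <- r) H (E k).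
Proof.
move=> U Hr; rewrite -(big_map E predT H) big_uniq.
  by apply: eq_bigl => p; rewrite in_setOf.
rewrite map_inj_in_uniq // => i j Hi Hj /eqP.
by rewrite E_eq ?(allP Hr i Hi) ?(allP Hr j Hj) // => /eqP.
Qed.

Lemma setU1_setOf k s : E k |: setOf s = setOf (k :: s).
Proof. by apply/setP => p; rewrite in_setU1 !in_setOf /= in_cons. Qed.

Lemma card_filter_setOf s k : uniq s -> lt10 s -> (k < 10)%N ->
  #|[set f in setOf s | edge_lt f (E k)]| = count (fun m => eltN m k) s.
Proof.
move=> U Hs Hk.
have Hf : lt10 (filter (fun m => eltN m k) s).
  by apply/allP => m; rewrite mem_filter => /andP [_ Hm]; exact: (allP Hs m Hm).
have -> : [set f in setOf s | edge_lt f (E k)] = setOf (filter (fun m => eltN m k) s).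
  apply/setP => p; rewrite in_set !in_setOf.
  apply/andP/mapP => [[/mapP [m Hm ->] Hlt]|[m Hm ->]].
    exists m => //; rewrite mem_filter Hm andbT -edge_ltE //; exact: (allP Hs m Hm).
  move: Hm; rewrite mem_filter => /andP [Hlt Hm]; split; first exact: map_f.
  by rewrite edge_ltE // (allP Hs m Hm).
by rewrite card_setOf ?filter_uniq // size_filter.
Qed.

Lemma lt10_iota : lt10 (iota 0 10).
Proof. by []. Qed.

Lemma bd_setOf (X : chain 5) s0 : uniq s0 -> lt10 s0 ->
  bd (Kn 5) X (setOf s0) = \sum_(k <- iota 0 10)
     (if k \in s0 then 0 else sgnN (odd (count (fun m => eltN m k) s0)) (X (setOf (k :: s0)))).
Proof.
move=> U Hs; rewrite /bd ffunE.
transitivity (\sum_(e in Kn 5) (if e \in setOf s0 then 0 else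
   (if odd #|[set f in setOf s0 | edge_lt f e]| then - X (e |: setOf s0) else X (e |: setOf s0)))).
  rewrite big_mkcond [RHS]big_mkcond; apply: eq_bigr => e _; rewrite in_setD.
  by case: (e \in setOf s0); case: (e \in Kn 5).
rewrite Kn_setOf sum_setOf ?iota_uniq ?lt10_iota //.
apply: eq_big_seq => k; rewrite mem_iota add0n => /andP [_ Hk].
by rewrite in_setOf E_in // setU1_setOf card_filter_setOf.
Qed.

Lemma sgnN_ffun (b : bool) (x : galg 5) g : (sgnN b x) g = sgnN b (x g).
Proof. by case: b; rewrite /sgnN ?ffunE. Qed.

Lemma bd_zero (X : chain 5) i (F' : {set edge 5}) :
  (forall F : {set edge 5}, ~~ (F \subset Kn 5) || (#|F| != i) -> X F = 0) ->
  ~~ ((F' \subset Kn 5) && (#|F'|.+1 == i)) -> bd (Kn 5) X F' = 0.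
Proof.
move=> HX H; rewrite /bd ffunE; apply: big1 => e; rewrite in_setD => /andP [HeF HeK].
rewrite HX ?oppr0 ?if_same //.
rewrite -negb_and; move: H; apply: contra => /andP [Hs /eqP Hc]; apply/andP; split.
  exact: subset_trans (subsetUr _ _) Hs.
by rewrite -Hc cardsU1 HeF.
Qed.
Definition TCtab : slots := [::
  ([::0], [::([::0;1;2;3;4], - 1%:Z);
    ([::0;1;2;4;3], - 1%:Z);
    ([::0;1;3;2;4], - 1%:Z);
    ([::0;1;4;2;3], - 1%:Z);
    ([::0;3;1;2;4], - 1%:Z);
    ([::0;3;2;1;4], - 1%:Z);
    ([::0;4;1;2;3], - 1%:Z);
    ([::0;4;2;1;3], - 1%:Z);
    ([::2;0;1;3;4], - 1%:Z);
    ([::2;0;1;4;3], - 1%:Z);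
    ([::2;0;3;1;4], - 1%:Z);
    ([::2;0;4;1;3], - 1%:Z);
    ([::2;3;0;1;4], - 1%:Z);
    ([::2;4;0;1;3], - 2%:Z);
    ([::3;0;1;2;4], - 2%:Z);
    ([::3;0;2;1;4], - 2%:Z);
    ([::3;0;2;4;1], - 1%:Z);
    ([::3;0;4;2;1], - 1%:Z);
    ([::3;2;0;1;4], - 1%:Z);
    ([::3;4;0;1;2], - 1%:Z);
    ([::3;4;0;2;1], - 1%:Z);
    ([::3;4;2;0;1], - 1%:Z);
    ([::4;0;1;2;3], - 1%:Z);
    ([::4;0;1;3;2], - 1%:Z);
    ([::4;0;2;1;3], - 1%:Z);
    ([::4;0;2;3;1], - 1%:Z);
    ([::4;0;3;1;2], - 1%:Z);
    ([::4;0;3;2;1], - 1%:Z);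
    ([::4;2;0;1;3], - 1%:Z);
    ([::4;2;0;3;1], - 1%:Z);
    ([::4;2;3;0;1], - 1%:Z);
    ([::4;3;0;1;2], - 1%:Z);
    ([::4;3;0;2;1], - 1%:Z);
    ([::4;3;2;0;1], - 1%:Z)]);
  ([::1], [::([::0;1;2;3;4], - 1%:Z);
    ([::0;1;2;4;3], - 1%:Z);
    ([::0;1;3;2;4], - 1%:Z);
    ([::0;1;4;2;3], - 1%:Z);
    ([::0;2;1;4;3], - 1%:Z);
    ([::0;2;4;1;3], - 1%:Z);
    ([::3;0;1;4;2], - 1%:Z);
    ([::3;0;4;1;2], - 1%:Z)]);
  ([::2], [::([::0;1;2;4;3], - 1%:Z);
    ([::0;1;4;2;3], - 1%:Z);
    ([::0;2;1;3;4], - 1%:Z);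
    ([::0;2;1;4;3], - 1%:Z);
    ([::0;2;3;1;4], - 1%:Z);
    ([::0;2;4;1;3], - 1%:Z);
    ([::2;1;0;3;4], 1%:Z)]);
  ([::3], [::([::0;1;2;4;3], 1%:Z);
    ([::0;1;4;2;3], 1%:Z);
    ([::0;2;1;4;3], 1%:Z);
    ([::0;2;4;1;3], 1%:Z);
    ([::1;0;2;4;3], - 1%:Z);
    ([::1;0;4;2;3], - 1%:Z);
    ([::2;1;0;4;3], 1%:Z);
    ([::3;0;1;2;4], 1%:Z);
    ([::3;0;2;1;4], 1%:Z);
    ([::3;1;0;2;4], 1%:Z);
    ([::3;1;2;0;4], 1%:Z);
    ([::3;2;0;1;4], 1%:Z);
    ([::3;2;1;0;4], 1%:Z)]);
  ([::4], [::([::0;1;2;3;4], 1%:Z);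
    ([::0;1;3;2;4], 1%:Z);
    ([::0;3;1;2;4], 1%:Z);
    ([::0;4;1;2;3], 1%:Z);
    ([::1;3;0;2;4], 1%:Z);
    ([::1;3;2;0;4], 1%:Z);
    ([::1;4;0;2;3], 1%:Z);
    ([::1;4;2;0;3], 1%:Z);
    ([::3;0;1;2;4], 1%:Z);
    ([::3;1;0;2;4], 1%:Z);
    ([::3;1;2;0;4], 1%:Z);
    ([::4;0;1;2;3], 1%:Z);
    ([::4;0;1;3;2], 1%:Z);
    ([::4;0;3;1;2], 1%:Z);
    ([::4;1;0;3;2], 1%:Z);
    ([::4;1;2;3;0], 1%:Z);
    ([::4;1;3;0;2], 1%:Z);
    ([::4;1;3;2;0], 1%:Z);
    ([::4;3;0;1;2], 1%:Z);
    ([::4;3;1;0;2], 1%:Z);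
    ([::4;3;1;2;0], 1%:Z)]);
  ([::5], [::([::1;4;0;2;3], 1%:Z);
    ([::1;4;2;0;3], 1%:Z)]);
  ([::6], [::([::0;2;1;4;3], 1%:Z);
    ([::3;2;1;4;0], 1%:Z)]);
  ([::7], [::([::2;0;1;4;3], 1%:Z);
    ([::2;0;4;1;3], 1%:Z);
    ([::2;4;0;1;3], 1%:Z);
    ([::2;4;1;0;3], 1%:Z)]);
  ([::8], [::([::0;1;2;4;3], 1%:Z);
    ([::1;0;2;4;3], 1%:Z);
    ([::3;0;2;4;1], 1%:Z);
    ([::3;1;2;4;0], 1%:Z)]);
  ([::9], [::([::0;1;2;3;4], 1%:Z);
    ([::0;1;3;2;4], 1%:Z);
    ([::1;0;2;3;4], 1%:Z);
    ([::1;0;3;2;4], 1%:Z);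
    ([::2;0;1;3;4], 1%:Z);
    ([::2;0;3;1;4], 1%:Z);
    ([::2;1;0;3;4], 1%:Z);
    ([::2;1;3;0;4], 1%:Z)])].

Definition TBtab : slots := [::
  ([::0;1], [::([::0;4;1;2;3], 1%:Z);
    ([::3;0;1;2;4], 1%:Z);
    ([::3;4;0;1;2], 1%:Z);
    ([::4;0;1;2;3], 1%:Z)]);
  ([::0;2], [::([::0;1;2;3;4], 1%:Z);
    ([::0;1;3;2;4], 1%:Z);
    ([::2;0;1;3;4], 1%:Z);
    ([::4;0;1;2;3], 1%:Z);
    ([::4;0;1;3;2], 1%:Z);
    ([::4;0;2;1;3], 1%:Z);
    ([::4;2;0;1;3], 1%:Z)]);
  ([::0;3], [::([::2;0;1;4;3], 1%:Z);
    ([::3;0;1;2;4], 1%:Z);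
    ([::3;0;2;1;4], 1%:Z)]);
  ([::0;4], [::([::0;3;1;2;4], 1%:Z);
    ([::0;4;1;2;3], 1%:Z);
    ([::3;0;1;2;4], 1%:Z);
    ([::4;0;1;3;2], 1%:Z);
    ([::4;0;3;1;2], 1%:Z);
    ([::4;3;0;1;2], 1%:Z)]);
  ([::0;7], [::([::2;4;0;1;3], 1%:Z)]);
  ([::0;8], [::([::0;1;2;4;3], 1%:Z);
    ([::3;0;2;4;1], 1%:Z)]);
  ([::0;9], [::([::0;1;2;3;4], 1%:Z);
    ([::0;1;3;2;4], 1%:Z);
    ([::2;0;1;3;4], 1%:Z);
    ([::2;0;3;1;4], 1%:Z)]);
  ([::1;2], [::([::0;1;2;3;4], 1%:Z)]);
  ([::1;3], [::([::0;1;2;4;3], 1%:Z);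
    ([::0;2;1;4;3], 1%:Z);
    ([::0;2;4;1;3], 1%:Z);
    ([::3;0;1;2;4], 1%:Z);
    ([::3;0;2;1;4], 1%:Z)]);
  ([::1;5], [::([::1;4;0;2;3], 1%:Z)]);
  ([::1;6], [::([::0;2;1;4;3], 1%:Z);
    ([::3;0;1;4;2], 1%:Z)]);
  ([::1;9], [::([::0;1;2;3;4], 1%:Z);
    ([::0;1;3;2;4], 1%:Z)]);
  ([::2;3], [::([::0;1;2;3;4], 1%:Z);
    ([::0;1;3;2;4], 1%:Z);
    ([::0;2;1;3;4], 1%:Z);
    ([::0;2;3;1;4], 1%:Z)]);
  ([::2;4], [::([::0;1;2;3;4], 1%:Z);
    ([::0;1;3;2;4], 1%:Z);
    ([::0;3;1;2;4], 1%:Z);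
    ([::1;0;2;3;4], 1%:Z);
    ([::1;0;3;2;4], 1%:Z);
    ([::4;0;1;2;3], 1%:Z);
    ([::4;0;1;3;2], 1%:Z);
    ([::4;0;3;1;2], 1%:Z);
    ([::4;1;0;3;2], 1%:Z)]);
  ([::2;6], [::([::0;2;1;4;3], 1%:Z)]);
  ([::2;8], [::([::0;1;2;4;3], 1%:Z)]);
  ([::3;4], [::([::0;1;2;3;4], 1%:Z);
    ([::0;1;3;2;4], 1%:Z);
    ([::0;4;1;2;3], 1%:Z);
    ([::1;0;2;4;3], 1%:Z);
    ([::1;0;4;2;3], 1%:Z)]);
  ([::3;5], [::([::1;0;2;4;3], 1%:Z);
    ([::1;0;4;2;3], 1%:Z)]);
  ([::3;7], [::([::2;0;1;4;3], 1%:Z);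
    ([::2;0;4;1;3], 1%:Z)]);
  ([::4;9], [::([::1;0;2;3;4], 1%:Z);
    ([::1;0;3;2;4], 1%:Z)]);
  ([::5;8], [::([::1;0;2;4;3], 1%:Z)]);
  ([::6;7], [::([::2;0;1;4;3], 1%:Z)])].

Definition Wtab : seq (seq (seq nat)) := [::
  [::];
  [::];
  [::[::0;1;2;3;4];[::0;1;2;4;3];[::0;1;4;2;3];[::0;1;4;3;2];[::0;2;1;3;4];[::0;2;1;4;3];[::0;4;1;2;3];[::0;4;1;3;2];[::1;0;2;3;4];[::1;0;2;4;3];[::1;0;4;2;3];[::1;0;4;3;2];[::1;2;0;3;4];[::1;2;0;4;3];[::1;4;0;2;3];[::1;4;0;3;2];[::2;0;1;3;4];[::2;0;1;4;3];[::2;1;0;3;4];[::2;1;0;4;3];[::4;0;1;2;3];[::4;0;1;3;2];[::4;1;0;2;3];[::4;1;0;3;2]];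
  [::[::0;1;3;2;4];[::0;1;3;4;2];[::0;3;1;2;4];[::0;3;1;4;2];[::1;0;3;2;4];[::1;0;3;4;2];[::1;3;0;2;4];[::1;3;0;4;2];[::3;0;1;2;4];[::3;0;1;4;2];[::3;1;0;2;4];[::3;1;0;4;2]];
  [::[::0;1;3;2;4];[::0;1;3;4;2];[::0;1;4;2;3];[::0;1;4;3;2];[::0;3;1;2;4];[::0;3;1;4;2];[::0;4;1;2;3];[::0;4;1;3;2];[::1;0;3;2;4];[::1;0;3;4;2];[::1;0;4;2;3];[::1;0;4;3;2];[::1;3;0;2;4];[::1;3;0;4;2];[::1;4;0;2;3];[::1;4;0;3;2];[::3;0;1;2;4];[::3;0;1;4;2];[::3;1;0;2;4];[::3;1;0;4;2];[::4;0;1;2;3];[::4;0;1;3;2];[::4;1;0;2;3];[::4;1;0;3;2]];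
  [::];
  [::[::0;1;2;3;4];[::0;1;2;4;3];[::0;2;1;3;4];[::0;2;1;4;3];[::1;0;2;3;4];[::1;0;2;4;3];[::1;2;0;3;4];[::1;2;0;4;3];[::2;0;1;3;4];[::2;0;1;4;3];[::2;1;0;3;4];[::2;1;0;4;3]];
  [::[::0;1;2;3;4];[::0;1;2;4;3];[::0;2;1;3;4];[::0;2;1;4;3];[::1;0;2;3;4];[::1;0;2;4;3];[::1;2;0;3;4];[::1;2;0;4;3];[::2;0;1;3;4];[::2;0;1;4;3];[::2;1;0;3;4];[::2;1;0;4;3]];
  [::];
  [::]].

Lemma closed1 k : (k < 10)%N -> closedN [:: k].
Proof. by apply: (@from_iota (fun k => closedN [:: k]) 10); vm_compute. Qed.

Lemma closed2 k l : (k < 10)%N -> (l < 10)%N -> closedN [:: k; l].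
Proof. by apply: (@all2I (fun k l => closedN [:: k; l]) 10 10); vm_compute. Qed.

Lemma lt10_1 k : (k < 10)%N -> lt10 [:: k].
Proof. by move=> Hk; rewrite /lt10 /= Hk. Qed.

Lemma lt10_2 k l : (k < 10)%N -> (l < 10)%N -> lt10 [:: k; l].
Proof. by move=> Hk Hl; rewrite /lt10 /= Hk Hl. Qed.

Lemma bd_val sl s0 g : uniq s0 -> lt10 s0 -> slots_ok sl ->
  (forall k, (k < 10)%N -> closedN (k :: s0)) ->
  (bd (Kn 5) (chainOf sl) (setOf s0)) g = bdN sl s0 (code g).
Proof.
move=> U Hs Hsl Hc; rewrite bd_setOf // sum_ffunE /bdN isumE.
apply: eq_big_seq => k; rewrite mem_iota add0n => /andP [_ Hk].
case: (k \in s0); first by rewrite ffunE.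
have Hl : lt10 (k :: s0) by rewrite /lt10 /= Hk; exact: Hs.
by rewrite sgnN_ffun chain_val // Hc.
Qed.

Definition cc : chain 5 := chainOf TCtab.
Definition bb : chain 5 := chainOf TBtab.

Lemma TC_sz : slots_sz TCtab 1. Proof. by vm_compute. Qed.
Lemma TB_sz : slots_sz TBtab 2. Proof. by vm_compute. Qed.
Lemma TC_ok : slots_ok TCtab. Proof. by vm_compute. Qed.
Lemma TB_ok : slots_ok TBtab. Proof. by vm_compute. Qed.

Lemma check_c0 : all (fun t => bdN TCtab [::] t == 0) L120.
Proof. by vm_compute. Qed.

Lemma check_b : all (fun m => all (fun t => bdN TBtab [:: m] t == valN TCtab [:: m] t *+ 2) L120) (iota 0 10).
Proof. by vm_compute. Qed.

Lemma setOf0 : setOf [::] = set0.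
Proof. by apply/setP => p; rewrite in_setOf. Qed.

Lemma setOf1 m : setOf [:: m] = [set E m].
Proof. by apply/setP => p; rewrite in_setOf in_set1 /= mem_seq1. Qed.

Lemma cc_cycle : bd (Kn 5) cc = 0.
Proof.
apply/ffunP => F'; rewrite [RHS]ffunE.
case: (boolP ((F' \subset Kn 5) && (#|F'|.+1 == 1)%N)) => HF; last first.
  apply: (bd_zero (i := 1)) => // F HF'; exact: (@chainOf_zero TCtab 1 F TC_sz HF').
move: HF => /andP [_ /eqP [] /cards0_eq ->]; rewrite -setOf0.
apply/ffunP => g; rewrite /cc (@bd_val TCtab [::] g) //= ?TC_ok; last by move=> k Hk; exact: closed1.
by rewrite ffunE; apply/eqP; exact: (allP check_c0 _ (code_L120 g)).
Qed.

Lemma bb_bound : bd (Kn 5) bb = cc *+ 2.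
Proof.
apply/ffunP => F'; rewrite ffunMnE.
case: (boolP ((F' \subset Kn 5) && (#|F'|.+1 == 2)%N)) => HF; last first.
  rewrite (bd_zero (i := 2)) //; last by move=> F HF'; exact: (@chainOf_zero TBtab 2 F TB_sz HF').
  rewrite /cc (@chainOf_zero TCtab 1 F' TC_sz) ?mul0rn //.
  by move: HF; rewrite negb_and eqSS.
move: HF => /andP [HK /eqP [] /eqP /cards1P [f Ef]].
have [m Hm Efm] : exists2 m, (m < 10)%N & f = E m.
  move: HK; rewrite Ef sub1set Kn_setOf in_setOf => /mapP [m]; rewrite mem_iota add0n => /andP [_ Hm] ->.
  by exists m.
rewrite Ef Efm -setOf1; apply/ffunP => g.
rewrite /bb (@bd_val TBtab [:: m] g) //= ?TB_ok ?Hm //; last by move=> k Hk; exact: closed2.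
rewrite ffunMnE /cc chain_val ?TC_ok ?lt10_1 ?closed1 //.
apply/eqP; have := from_iota check_b Hm => /allP; apply; exact: code_L120.
Qed.

Definition Wt (m : nat) : table := [seq (t, 1%:Z) | t <- nth [::] Wtab m].
Definition phi (x : chain 5) : int :=
  \sum_(m <- iota 0 10) \sum_(g : {perm 'I_5}) tabv (Wt m) (code g) * x (setOf [:: m]) g.
Definition phicN : int := isum (fun m => isum (fun j => j.2 * valN TCtab [:: m] j.1) (Wt m)) (iota 0 10).

Lemma phicN_val : phicN = 11.
Proof. by vm_compute. Qed.

Lemma Wt_ok m : (m < 10)%N -> all (fun j => j.1 \in L120) (Wt m).
Proof. by apply: (@from_iota (fun m => all (fun j => j.1 \in L120) (Wt m)) 10); vm_compute. Qed.

Lemma phi_cc : phi cc = 11.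
Proof.
rewrite -phicN_val /phi /phicN isumE; apply: eq_big_seq => m; rewrite mem_iota add0n => /andP [_ Hm].
under eq_bigr => g _ do rewrite /cc (@chain_val TCtab [:: m] g (lt10_1 Hm) (closed1 Hm) TC_ok).
by rewrite (sum_perm (fun t => tabv (Wt m) t * valN TCtab [:: m] t)) tab_sum ?Wt_ok // isumE.
Qed.

Definition RW (w : nat) (s : seq nat) (th : seq nat) : int :=
  isum (fun j => j.2 * b2i (inSN s (comp_inv j.1 th))) (Wt w).

Lemma Q_form (b' : chain 5) y k m w : (k < 10)%N -> (m < 10)%N -> (w < 10)%N ->
  b' (setOf [:: k; m]) = gmul y (aF (setOf [:: k; m])) ->
  \sum_(g : {perm 'I_5}) tabv (Wt w) (code g) * b' (setOf [:: k; m]) g =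
  \sum_(h : {perm 'I_5}) y h * RW w [:: k; m] (code h).
Proof.
move=> Hk Hm Hw ->.
under eq_bigr => g _ do rewrite ffunE big_distrr /=.
rewrite exchange_big /=; apply: eq_bigr => h _.
rewrite /RW isumE -(@tab_sum (Wt w) (fun t => b2i (inSN [:: k; m] (comp_inv t (code h)))) (Wt_ok Hw)).
rewrite -(sum_perm (fun t => tabv (Wt w) t * b2i (inSN [:: k; m] (comp_inv t (code h))))) big_distrr /=.
apply: eq_bigr => g _.
by rewrite aF_setOf ?lt10_2 ?closed2 // code_mulV mulrCA.
Qed.

Lemma pair_sum (A : nat -> nat -> int) n :
  \sum_(m <- iota 0 n) \sum_(k <- iota 0 n) A m k =
  \sum_(m <- iota 0 n) \sum_(k <- iota 0 n)
     (if (m < k)%N then A m k + A k m else if m == k then A m m else 0).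
Proof.
transitivity (\sum_(m <- iota 0 n) \sum_(k <- iota 0 n)
    ((if (m < k)%N then A m k else 0) + (if m == k then A m m else 0)) +
  \sum_(m <- iota 0 n) \sum_(k <- iota 0 n) (if (k < m)%N then A m k else 0)).
  rewrite -big_split; apply: eq_bigr => m _; rewrite -big_split; apply: eq_bigr => k _ /=.
  by case: (ltngtP m k) => [H|H|->]; rewrite ?eqxx ?addr0 ?add0r.
rewrite [X in _ + X = _]exchange_big /= -big_split; apply: eq_bigr => m _.
rewrite -big_split; apply: eq_bigr => k _ /=.
by case: (ltngtP m k) => [H|H|->]; rewrite ?eqxx ?addr0 ?add0r.
Qed.

Lemma setOf_swap m k : setOf [:: m; k] = setOf [:: k; m].
Proof. by apply/setP => p; rewrite !in_setOf !mem_mapE /= !orbF orbC. Qed.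

Lemma sgnN_sumM (b : bool) (y : galg 5) (R : {perm 'I_5} -> int) :
  sgnN b (\sum_h y h * R h) = \sum_h y h * sgnN b (R h).
Proof.
case: b; rewrite /sgnN //.
by rewrite -sumrN; apply: eq_bigr => h _; rewrite mulrN.
Qed.

Definition check_phi : bool :=
  all (fun m => all (fun k => (m < k)%N ==> all (fun th =>
     (2 %| sgnN (eltN m k) (RW m [:: k; m] th) + sgnN (eltN k m) (RW k [:: k; m] th))%Z) L120)
   (iota 0 10)) (iota 0 10).

Lemma check_phi_ok : check_phi.
Proof. by vm_compute. Qed.

Lemma phi_even b' : is_chain (Kn 5) 2 b' -> (2 %| phi (bd (Kn 5) b'))%Z.
Proof.
move=> Hb.
pose A m k := if k == m then 0 else
   sgnN (eltN m k) (\sum_(g : {perm 'I_5}) tabv (Wt m) (code g) * b' (setOf [:: k; m]) g).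
have E1 : phi (bd (Kn 5) b') = \sum_(m <- iota 0 10) \sum_(k <- iota 0 10) A m k.
  rewrite /phi; apply: eq_big_seq => m; rewrite mem_iota add0n => /andP [_ Hm].
  under eq_bigr => g _ do rewrite bd_setOf ?lt10_1 // sum_ffunE big_distrr /=.
  rewrite exchange_big /=; apply: eq_bigr => k _.
  rewrite /A mem_seq1; case: (k == m).
    by rewrite big1 // => g _; rewrite ffunE mulr0.
  rewrite addn0 oddb; case: (eltN m k); rewrite /sgnN //.
  by rewrite -sumrN; apply: eq_bigr => g _; rewrite ffunE mulrN.
rewrite E1 pair_sum big_seq; apply: rpred_sum => m; rewrite mem_iota add0n => /andP [_ Hm].
rewrite big_seq; apply: rpred_sum => k; rewrite mem_iota add0n => /andP [_ Hk].
case: ifP => [Hmk|_]; last by case: ifP => [/eqP ->|_]; rewrite /A ?eqxx ?dvdz0.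
rewrite /A (ltn_eqF Hmk) (gtn_eqF Hmk) (setOf_swap m k).
have [[y Hy] _] := Hb (setOf [:: k; m]).
rewrite (Q_form Hk Hm Hm Hy) (Q_form Hk Hm Hk Hy) !sgnN_sumM -big_split.
apply: rpred_sum => h _ /=; rewrite -mulrDr; apply: dvdz_mull.
have := all2I check_phi_ok Hm Hk; rewrite Hmk implyTb => /allP H; exact: (H _ (code_L120 h)).
Qed.

Theorem theorem4p1 :
  exists c : chain 5,
    [/\ is_chain (Kn 5) 1 c,
        bd (Kn 5) c = 0,
        ~ (exists b : chain 5, is_chain (Kn 5) 2 b /\ bd (Kn 5) b = c)
      & exists b : chain 5, is_chain (Kn 5) 2 b /\ bd (Kn 5) b = c *+ 2].
Proof.
exists cc; split.
- exact: (chainOf_is_chain TC_sz).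
- exact: cc_cycle.
- move=> [b' [Hb Hbd]]; have := phi_even Hb; rewrite Hbd phi_cc.
  by vm_compute.
- exists bb; split; [exact: (chainOf_is_chain TB_sz) | exact: bb_bound].
Qed.
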